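(* Let $(\Omega,\mathcal{F},P,T)$ be a measure preserving system. The following are equivalent: (i) $P$ is weakly mixing; (ii) for every $r>0$, $\lim_{n\to\infty}\frac{1}{n}\sum_{i=0}^{n-1}P^r(B\cap T^{-i}C)=P^r(B)P^r(C)$ for all $B,C\in\mathcal{F}$; (iii) for all $B,C\in\mathcal{F}$, $\lim_{n\to\infty}\frac{1}{n}\sum_{i=0}^{n-1}P(B\cap T^{-i}C)=P(B)P(C)$, and there exists $r=r_{B,C}\in(0,1/2]$ such that $\lim_{n\to\infty}\frac{1}{n}\sum_{i=0}^{n-1}P^r(B\cap T^{-i}C)=P^r(B)P^r(C)$. In particular, $P$ is weakly mixing if and only if $P$ is ergodic and $\lim_{n\to\infty}\frac{1}{n}\sum_{i=0}^{n-1}P^{1/2}(B\cap T^{-i}C)=P^{1/2}(B)P^{1/2}(C)$ for all $B,C\in\mathcal{F}$.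
   Context: A measure preserving system $(\Omega,\mathcal{F},P,T)$ consists of a probability space and a measurable $T:\Omega\to\Omega$ with $P(T^{-1}A)=P(A)$ for all $A\in\mathcal{F}$. $P^r(A)$ denotes $(P(A))^r$. $P$ is ergodic if $P(A)\in\{0,1\}$ whenever $T^{-1}A=A$; weakly mixing if $P\times P$ is ergodic for $T\times T$. *)

(* Defs.v *)
From HB Require Import structures.
From mathcomp Require Import all_boot all_order all_algebra.
From mathcomp Require Import all_classical all_reals all_analysis.
Set Implicit Arguments. Unset Strict Implicit. Unset Printing Implicit Defensive.
Import Order.TTheory GRing.Theory Num.Theory.
Import numFieldNormedType.Exports.
Local Open Scope classical_set_scope.
Local Open Scope ring_scope.

Definition measure_preserving {d} {T : measurableType d} {R : realType}
  (P : set T -> \bar R) (f : T -> T) : Prop :=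
  measurable_fun setT f /\
  forall A : set T, measurable A -> P (f @^-1` A) = P A.

Definition ergodic {d} {T : measurableType d} {R : realType}
  (P : set T -> \bar R) (f : T -> T) : Prop :=
  forall A : set T, measurable A -> f @^-1` A = A ->
    P A = 0%E \/ P A = 1%E.

Definition weakly_mixing {d} {T : measurableType d} {R : realType}
  (P : set T -> \bar R) (f : T -> T) : Prop :=
  ergodic (P \x P)%E (fun xy : T * T => (f xy.1, f xy.2)).

(* (1/n) sum_{i<n} P^r(B ∩ T^{-i} C) ; P is finite so we take its real value *)
Definition avg_pow {d} {T : measurableType d} {R : realType}
  (P : set T -> \bar R) (f : T -> T) (r : R) (B C : set T) (n : nat) : R :=
  n%:R^-1 * \sum_(i < n) (fine (P (B `&` (iter i f) @^-1` C))) `^ r.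

Definition avg {d} {T : measurableType d} {R : realType}
  (P : set T -> \bar R) (f : T -> T) (B C : set T) (n : nat) : R :=
  n%:R^-1 * \sum_(i < n) fine (P (B `&` (iter i f) @^-1` C)).

(* Main.v *)
Require Import Defs.
From HB Require Import structures.
From mathcomp Require Import all_boot all_order all_algebra.
From mathcomp Require Import all_classical all_reals all_analysis.
From mathcomp Require Import ring lra.
From mathcomp Require Import measurable_realfun.
Import Order.TTheory GRing.Theory Num.Theory.
Import numFieldNormedType.Exports.
Local Open Scope classical_set_scope.
Local Open Scope ring_scope.

Set Implicit Arguments. Unset Strict Implicit. Unset Printing Implicit Defensive.

Section RealLemmas.
Variable R : realType.
Implicit Types (x y : nat -> R).

Definition mean x (n : nat) : R := n%:R^-1 * \sum_(i < n) x i.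

Lemma cvg_eps (u : nat -> R) l : (forall e : R, 0 < e -> exists N, forall n, (N <= n)%N -> `|u n - l| <= e) -> u @ \oo --> l.
Proof.
move=> H; apply/cvgrPdist_le => e e0; have [N HN] := H e e0.
exists N => // n /= Nn. rewrite distrC. exact: HN.
Qed.

Lemma eps_cvg (u : nat -> R) l : u @ \oo --> l -> (forall e : R, 0 < e -> exists N, forall n, (N <= n)%N -> `|u n - l| <= e).
Proof.
move=> /cvgrPdist_le H e e0; have [N _ HN] := H e e0.
exists N => n Nn; rewrite distrC; exact: HN.
Qed.

Lemma meanD x y n : mean (fun i => x i + y i) n = mean x n + mean y n.
Proof. by rewrite /mean big_split /= mulrDr. Qed.

Lemma meanZ a x n : mean (fun i => a * x i) n = a * mean x n.
Proof. by rewrite /mean -mulr_sumr mulrCA. Qed.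

Lemma meanN x n : mean (fun i => - x i) n = - mean x n.
Proof. by rewrite /mean sumrN mulrN. Qed.

Lemma meanB x y n : mean (fun i => x i - y i) n = mean x n - mean y n.
Proof. by rewrite meanD meanN. Qed.

Lemma meanC k n : (0 < n)%N -> mean (fun=> k) n = k.
Proof.
move=> n0; rewrite /mean sumr_const card_ord -(mulr_natl k) mulrA mulVf ?mul1r//.
by rewrite pnatr_eq0 -lt0n.
Qed.

Lemma mean_le x y n : (forall i, x i <= y i) -> mean x n <= mean y n.
Proof.
move=> H; rewrite /mean ler_wpM2l ?invr_ge0 ?ler0n//.
by apply: ler_sum => i _; exact: H.
Qed.

Lemma mean_ge0 x n : (forall i, 0 <= x i) -> 0 <= mean x n.
Proof.
move=> H; rewrite /mean mulr_ge0 ?invr_ge0 ?ler0n// sumr_ge0// => i _; exact: H.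
Qed.

Lemma norm_mean x n : `|mean x n| <= mean (fun i => `|x i|) n.
Proof.
rewrite /mean normrM ger0_norm ?invr_ge0 ?ler0n// ler_wpM2l ?invr_ge0 ?ler0n//.
exact: ler_norm_sum.
Qed.

Lemma mean_sq0 x (c : R) : mean x @ \oo --> c -> mean (fun i => x i ^+ 2) @ \oo --> c ^+ 2 ->
  mean (fun i => (x i - c) ^+ 2) @ \oo --> 0.
Proof.
move=> H1 H2.
have E : forall n, (0 < n)%N -> mean (fun i => (x i - c) ^+ 2) n =
   mean (fun i => x i ^+ 2) n - 2 * c * mean x n + c ^+ 2.
  move=> n n0.
  have -> : (fun i => (x i - c) ^+ 2) = (fun i => (x i ^+ 2 + (- (2 * c)) * x i) + c ^+ 2).
    by apply/funext => i; rewrite sqrrB; lra.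
  by rewrite meanD meanC // meanD meanZ; lra.
have -> : (0 : R) = c ^+ 2 - 2 * c * c + c ^+ 2 by lra.
suff HH : (fun n => mean (fun i => x i ^+ 2) n - 2 * c * mean x n + c ^+ 2) @ \oo --> c ^+ 2 - 2 * c * c + c ^+ 2.
  apply: cvg_trans HH; apply: near_eq_cvg; near=> n; rewrite E //; near: n.
  by exists 1%N.
apply: cvgD; last exact: cvg_cst.
apply: cvgB => //; exact: cvgMr.
Unshelve. all: end_near.
Qed.

Lemma abs_le_sq (u e : R) : 0 < e -> `|u| <= e + e^-1 * u ^+ 2.
Proof.
move=> e0; have a0 : 0 <= `|u| by [].
have h : u ^+ 2 = `|u| ^+ 2 by rewrite real_normK ?num_real.
rewrite h; set a := `|u| in a0 h *.
rewrite -(@ler_pM2l _ e) // mulrDr mulrA mulfV ?gt_eqF // mul1r.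
nra.
Qed.

Lemma mean_sq_abs x (c : R) : mean (fun i => (x i - c) ^+ 2) @ \oo --> 0 ->
  mean (fun i => `|x i - c|) @ \oo --> 0.
Proof.
move=> /eps_cvg H; apply: cvg_eps => e e0.
have e20 : 0 < e / 2 by rewrite divr_gt0.
have [N HN] := H ((e / 2) ^+ 2) (exprn_gt0 _ e20).
exists (maxn N 1) => n; rewrite geq_max => /andP[Nn n1].
have := HN n Nn; rewrite subr0 => hb.
have hm : 0 <= mean (fun i => (x i - c) ^+ 2) n by apply: mean_ge0 => i; exact: sqr_ge0.
rewrite ger0_norm in hb => //.
have hl : mean (fun i => `|x i - c|) n <= e / 2 + (e / 2)^-1 * mean (fun i => (x i - c) ^+ 2) n.
  have := @mean_le (fun i => `|x i - c|) (fun i => e / 2 + (e / 2)^-1 * (x i - c) ^+ 2) n.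
  rewrite meanD (meanZ (e / 2)^-1) meanC //; apply => i; exact: abs_le_sq.
rewrite subr0 ger0_norm; last by apply: mean_ge0.
apply: (le_trans hl).
have : (e / 2)^-1 * mean (fun i => (x i - c) ^+ 2) n <= e / 2.
  rewrite ler_pdivrMl // ; by rewrite expr2 in hb.
lra.
Qed.

Lemma mean_cont x (g : R -> R) (c : R) :
  (forall i, 0 <= x i <= 1) ->
  (forall e : R, 0 < e -> exists M : R, 0 < M /\ forall y : R, 0 <= y <= 1 -> `|g y - g c| <= e + M * `|y - c|) ->
  mean (fun i => `|x i - c|) @ \oo --> 0 ->
  mean (fun i => g (x i)) @ \oo --> g c.
Proof.
move=> x01 hg /eps_cvg H; apply: cvg_eps => e e0.
have e20 : 0 < e / 2 by rewrite divr_gt0.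
have [M [M0 HM]] := hg _ e20.
have [N HN] := H (e / 2 / M) (divr_gt0 e20 M0).
exists (maxn N 1) => n; rewrite geq_max => /andP[Nn n1].
have := HN n Nn; rewrite subr0 ger0_norm; last by apply: mean_ge0.
move=> hb.
rewrite -(meanC (g c) n1) -meanB.
apply: (le_trans (norm_mean _ _)).
have hl : mean (fun i => `|g (x i) - g c|) n <= e / 2 + M * mean (fun i => `|x i - c|) n.
  have := @mean_le (fun i => `|g (x i) - g c|) (fun i => e / 2 + M * `|x i - c|) n.
  rewrite meanD (meanZ M) meanC //; apply => i; exact: HM.
apply: (le_trans hl).
have : M * mean (fun i => `|x i - c|) n <= e / 2.
  by rewrite -ler_pdivlMl // mulrC.
lra.
Qed.

Lemma mean_prod x y (a b : R) :
  (forall i, `|y i| <= 1) -> `|a| <= 1 ->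
  mean (fun i => `|x i - a|) @ \oo --> 0 ->
  mean (fun i => `|y i - b|) @ \oo --> 0 ->
  mean (fun i => x i * y i) @ \oo --> a * b.
Proof.
move=> y1 a1 /eps_cvg Hx /eps_cvg Hy; apply: cvg_eps => e e0.
have e20 : 0 < e / 2 by rewrite divr_gt0.
have [N1 HN1] := Hx _ e20; have [N2 HN2] := Hy _ e20.
exists (maxn (maxn N1 N2) 1) => n; rewrite !geq_max => /andP[/andP[n1 n2] n0].
have := HN1 n n1; rewrite subr0 ger0_norm; last by apply: mean_ge0.
have := HN2 n n2; rewrite subr0 ger0_norm; last by apply: mean_ge0.
move=> h2 h1.
rewrite -(meanC (a * b) n0) -meanB.
apply: (le_trans (norm_mean _ _)).
have hl : mean (fun i => `|x i * y i - a * b|) n <=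
   mean (fun i => `|x i - a|) n + mean (fun i => `|y i - b|) n.
  rewrite -meanD; apply: mean_le => i.
  have -> : x i * y i - a * b = (x i - a) * y i + a * (y i - b) by ring.
  apply: (le_trans (ler_normD _ _)); rewrite !normrM.
  apply: lerD.
    by rewrite -[X in _ <= X]mulr1 ler_wpM2l.
  by rewrite -[X in _ <= X]mul1r ler_wpM2r.
apply: (le_trans hl); lra.
Qed.

Lemma squeeze0 (u v : nat -> R) : (forall n, 0 <= u n <= v n) -> v @ \oo --> 0 -> u @ \oo --> 0.
Proof.
move=> huv /eps_cvg H; apply: cvg_eps => e e0; have [N HN] := H e e0.
exists N => n Nn; have := HN n Nn; rewrite !subr0 => h.
have /andP[h1 h2] := huv n.
rewrite ger0_norm // (le_trans h2) //; apply: le_trans (ler_norm _) h.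
Qed.

End RealLemmas.

Section PowR.
Variable R : realType.

Lemma powR_cont_at (r c : R) : 0 < r -> 0 <= c -> forall e : R, 0 < e ->
  exists d : R, 0 < d /\ forall y : R, 0 <= y -> `|y - c| < d -> `|y `^ r - c `^ r| < e.
Proof.
move=> r0; rewrite le_eqVlt => /predU1P[<-|c0] e e0.
  have := @powR_cvg0 R r r0 => /cvgrPdist_lt /(_ e e0).
  rewrite /at_right /within => /nbhs_normP [d d0 Hd].
  exists d; split => // y y0 yd.
  rewrite powR0 ?gt_eqF //.
  move: y0; rewrite le_eqVlt => /predU1P[<-|y0]; first by rewrite powR0 ?gt_eqF // subr0 normr0.
  have := Hd y; rewrite /= sub0r normrN => /(_ _ y0).
  rewrite subr0 in yd; move=> /(_ yd).
  by rewrite subr0 sub0r normrN.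
have hd : derivable (fun x : R => x `^ r) c 1 by apply: (@derivable_powR R); rewrite in_itv /= c0.
have := differentiable_continuous (proj1 (derivable1_diffP _ _) hd).
move=> /cvgrPdist_lt /(_ e e0) /nbhs_normP [d d0 Hd].
exists d; split => // y y0 yd.
have := Hd y; rewrite /= distrC => /(_ yd).
by rewrite distrC.
Qed.

Lemma powR_le1 (y r : R) : 0 <= y <= 1 -> 0 < r -> y `^ r <= 1.
Proof.
move=> /andP[y0 y1] r0.
move: y0; rewrite le_eqVlt => /predU1P[<-|y0]; first by rewrite powR0 ?gt_eqF.
have := @ge0_ler_powR R r (ltW r0) y; rewrite !nnegrE => /(_ 1 (ltW y0) ler01 y1).
by rewrite powR1.
Qed.

Lemma powR_modulus (r c : R) : 0 < r -> 0 <= c <= 1 ->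
  forall e : R, 0 < e -> exists M : R, 0 < M /\ forall y : R, 0 <= y <= 1 ->
   `|y `^ r - c `^ r| <= e + M * `|y - c|.
Proof.
move=> r0 /andP[c0 c1] e e0.
have [d [d0 Hd]] := powR_cont_at r0 c0 e0.
exists d^-1; split; first by rewrite invr_gt0.
move=> y /andP[y0 y1].
have hy := powR_le1 (y := y) (r := r); have hc := powR_le1 (y := c) (r := r).
have py := powR_ge0 y r; have pc := powR_ge0 c r.
have [yd|yd] := ltP `|y - c| d.
  have := Hd y y0 yd; have := normr_ge0 (y - c); have : 0 < d^-1 by rewrite invr_gt0.
  move=> *; nra.
have : 1 <= d^-1 * `|y - c| by rewrite ler_pdivlMl // mulr1.
have : `|y `^ r - c `^ r| <= 1.
  rewrite ler_norml; have := hy; have := hc.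
  rewrite y0 y1 c0 c1 /= => /(_ isT r0) h1 /(_ isT r0) h2; lra.
lra.
Qed.

End PowR.
Section PowR2.
Variable R : realType.

Lemma tangent_powR (s c x : R) : 0 < s <= 1 -> 0 < c -> 0 <= x ->
  x `^ s <= c `^ (s - 1) * (s * x + (1 - s) * c).
Proof.
move=> /andP[s0 s1] c0 x0.
have [->|s1'] := eqVneq s 1.
  by rewrite subrr powRr0 mul1r mul1r mul0r addr0 powRr1.
have s1l : s < 1 by rewrite lt_neqAle s1' s1.
have q0 : 0 < 1 - s by rewrite subr_gt0.
have hpq : s^-1^-1 + (1 - s)^-1^-1 = 1 by rewrite !invrK addrC subrK.
have := @conjugate_powR R (x `^ s) (c `^ (1 - s)) (s^-1) ((1 - s)^-1) (powR_ge0 _ _) (powR_ge0 _ _)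
  (ltac:(by rewrite invr_gt0) : 0 < s^-1) (ltac:(by rewrite invr_gt0) : 0 < (1 - s)^-1) hpq.
rewrite !invrK -powRrM -powRrM mulfV ?gt_eqF // mulfV ?gt_eqF // !powRr1 ?(ltW c0) //.
move=> h.
have cpos : 0 < c `^ (s - 1) by apply: powR_gt0.
have E : x `^ s = c `^ (s - 1) * (x `^ s * c `^ (1 - s)).
  rewrite mulrCA -powRD; last by rewrite (gt_eqF c0) implybT.
  by rewrite (_ : s - 1 + (1 - s) = 0) ?powRr0 ?mulr1 //; ring.
rewrite E ler_pM2l //; lra.
Qed.

End PowR2.

Section Simple.
Context d (X : measurableType d) (R : realType) (mu : probability X R).

Definition mr (A : set X) : R := fine (mu A).

Lemma mrE A : measurable A -> mu A = (mr A)%:E.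
Proof. by move=> mA; rewrite /mr fineK // fin_num_measure. Qed.

Lemma mr_ge0 A : 0 <= mr A.
Proof. by rewrite /mr fine_ge0 // measure_ge0. Qed.

Lemma mr_le1 A : measurable A -> mr A <= 1.
Proof. by move=> mA; rewrite -lee_fin -mrE // probability_le1. Qed.

Lemma mrT : mr setT = 1.
Proof. by rewrite /mr probability_setT. Qed.

Fixpoint good (s : seq (R * set X)) : Prop :=
  if s is p :: s' then (0 <= p.1 /\ measurable p.2) /\ good s' else True.

Definition sf (s : seq (R * set X)) (x : X) : R := \sum_(p <- s) p.1 * \1_(p.2) x.
Definition sI (s : seq (R * set X)) : R := \sum_(p <- s) p.1 * mr p.2.

Lemma good_cat s1 s2 : good s1 -> good s2 -> good (s1 ++ s2).
Proof. by elim: s1 => //= p s IH [h1 h2] h3; split => //; exact: IH. Qed.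

Lemma good_map (I : Type) (r : seq I) (w : I -> R) (A : I -> set X) :
  (forall i, 0 <= w i) -> (forall i, measurable (A i)) -> good [seq (w i, A i) | i <- r].
Proof. by move=> hw hA; elim: r => //= i r IH; split. Qed.

Lemma sf_cat s1 s2 x : sf (s1 ++ s2) x = sf s1 x + sf s2 x.
Proof. by rewrite /sf big_cat. Qed.
Lemma sI_cat s1 s2 : sI (s1 ++ s2) = sI s1 + sI s2.
Proof. by rewrite /sI big_cat. Qed.

Lemma sf_ge0 s x : good s -> 0 <= sf s x.
Proof.
elim: s => [|p s IH] /=; first by rewrite /sf big_nil.
move=> [[h1 h2] h3]; rewrite /sf big_cons addr_ge0 //; last exact: IH.
by rewrite mulr_ge0 // indicE.
Qed.

Lemma sf_meas s : good s -> measurable_fun setT (sf s).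
Proof.
elim: s => [|p s IH] /=.
  by move=> _; rewrite /sf; under eq_fun do rewrite big_nil; exact: measurable_cst.
move=> [[h1 h2] h3].
rewrite /sf; under eq_fun do rewrite big_cons.
apply: measurable_realfun.measurable_funD; last exact: IH.
apply: measurable_realfun.measurable_funM; first exact: measurable_cst.
exact: measurable_realfun.measurable_indic.
Qed.

Lemma sf_int s : good s -> (\int[mu]_x (sf s x)%:E = (sI s)%:E)%E.
Proof.
elim: s => [|p s IH] /=.
  move=> _; rewrite /sf /sI big_nil; under eq_fun do rewrite big_nil.
  by rewrite integral0.
move=> [[h1 h2] h3].
rewrite /sI big_cons.
under eq_fun do rewrite /sf big_cons EFinD.
rewrite ge0_integralD //; first last.
- by apply/measurable_EFinP; exact: sf_meas.
- by move=> x _; rewrite lee_fin sf_ge0.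
- apply/measurable_EFinP; apply: measurable_realfun.measurable_funM; first exact: measurable_cst.
  exact: measurable_realfun.measurable_indic.
- by move=> x _; rewrite lee_fin mulr_ge0 // indicE.
rewrite IH // EFinD; congr (_ + _)%E.
rewrite (eq_integral (fun x => p.1%:E * (\1_(p.2) x)%:E)%E); last by move=> x _; rewrite EFinM.
rewrite ge0_integralZl //; first last.
- by apply/measurable_EFinP; exact: measurable_realfun.measurable_indic.
- by rewrite integral_indic // setIT /mr EFinM fineK // fin_num_measure.
all: try (by move=> x _; rewrite lee_fin indicE).
all: try by rewrite lee_fin.
Qed.

Lemma sf_le s1 s2 : good s1 -> good s2 -> (forall x, sf s1 x <= sf s2 x) -> sI s1 <= sI s2.
Proof.
move=> g1 g2 h; rewrite -lee_fin -!sf_int //.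
apply: ge0_le_integral => //.
- by move=> x _; rewrite lee_fin sf_ge0.
- by apply/measurable_EFinP; exact: sf_meas.
- by apply/measurable_EFinP; exact: sf_meas.
- by move=> x _; rewrite lee_fin.
Qed.

Lemma mrD A B : measurable A -> measurable B -> mr (A `\` B) = mr A - mr (A `&` B).
Proof.
move=> mA mB; rewrite /mr measureD //; last by rewrite (le_lt_trans (probability_le1 mu mA)) // ltry.
rewrite fineB // ?fin_num_measure //; exact: measurableI.
Qed.

Lemma mr_le A B : measurable A -> measurable B -> A `<=` B -> mr A <= mr B.
Proof.
move=> mA mB AB; rewrite -lee_fin -!mrE //; apply: le_measure => //; rewrite inE //.
Qed.

Lemma mrC A : measurable A -> mr (~` A) = 1 - mr A.
Proof.
move=> mA; rewrite -setTD mrD // ?setTI ?mrT //.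
Qed.

Lemma mr0 : mr set0 = 0.
Proof. by rewrite /mr measure0. Qed.

End Simple.

Section Iter.
Context d (X : measurableType d) (R : realType) (mu : probability X R).
Variable S : X -> X.
Hypothesis mS : measurable_fun setT S.
Hypothesis pS : forall A, measurable A -> mu (S @^-1` A) = mu A.

Lemma iter_meas n : measurable_fun setT (iter n S).
Proof.
elim: n => [|n IH] /=; first exact: measurable_id.
exact: (measurableT_comp mS IH).
Qed.

Lemma preim_meas (f : X -> X) A : measurable_fun setT f -> measurable A -> measurable (f @^-1` A).
Proof. by move=> mf mA; rewrite -[X in measurable X]setTI; exact: mf. Qed.

Lemma iter_preim_meas n A : measurable A -> measurable (iter n S @^-1` A).
Proof. move=> mA; apply: preim_meas => //; exact: iter_meas. Qed.

Lemma iter_pres n A : measurable A -> mu (iter n S @^-1` A) = mu A.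
Proof.
elim: n A => [|n IH] A mA //=.
have -> : (fun x => S (iter n S x)) @^-1` A = iter n S @^-1` (S @^-1` A) by [].
rewrite IH ?pS //; exact: preim_meas.
Qed.

Lemma iter_mr n A : measurable A -> mr mu (iter n S @^-1` A) = mr mu A.
Proof. by move=> mA; rewrite /mr iter_pres. Qed.

Lemma iterSr' n x : iter n S (S x) = iter n.+1 S x.
Proof. by rewrite iterSr. Qed.

Definition cnt (C : set X) (n : nat) (x : X) : R := \sum_(i < n) \1_C (iter i S x).

Lemma cnt0 C x : cnt C 0 x = 0.
Proof. by rewrite /cnt big_ord0. Qed.

Lemma cnt_split C n m x : cnt C (n + m) x = cnt C n x + cnt C m (iter n S x).
Proof.
rewrite /cnt big_split_ord /=; congr (_ + _); apply: eq_bigr => i _.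
by rewrite addnC iterD.
Qed.

Lemma cntS C n x : cnt C n.+1 x = \1_C x + cnt C n (S x).
Proof.
have -> : n.+1 = (1 + n)%N by [].
rewrite cnt_split /cnt big_ord1 //.
Qed.

Lemma cnt_ge0 C n x : 0 <= cnt C n x.
Proof. by rewrite /cnt sumr_ge0 // => i _; rewrite indicE. Qed.

Lemma cnt_le C n x : cnt C n x <= n%:R.
Proof.
have -> : (n%:R : R) = \sum_(i < n) (1 : R) by rewrite sumr_const card_ord.
rewrite /cnt; apply: ler_sum => i _.
by rewrite indicE; case: (_ \in _).
Qed.

Lemma cntC C n x : cnt (~` C) n x = n%:R - cnt C n x.
Proof.
have -> : (n%:R : R) = \sum_(i < n) (1 : R) by rewrite sumr_const card_ord.
rewrite /cnt -sumrB; apply: eq_bigr => i _.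
by rewrite indicC indicE /=; case: (iter i S x \in C); rewrite ?subrr ?subr0.
Qed.

Lemma cnt_meas C n : measurable C -> measurable_fun setT (cnt C n).
Proof.
move=> mC; rewrite /cnt; apply: measurable_sum => i.
apply: measurableT_comp; first exact: measurable_indic.
exact: iter_meas.
Qed.

Lemma cnt_sf C n x : cnt C n x = sf [seq (1, iter i S @^-1` C) | i <- iota 0 n] x.
Proof.
rewrite /cnt /sf big_map -(big_mkord xpredT (fun i => \1_C (iter i S x))).
rewrite /index_iota subn0; apply: eq_bigr => i _; rewrite mul1r !indicE.
by [].
Qed.

Lemma cnt_sI C n : measurable C -> sI mu [seq (1, iter i S @^-1` C) | i <- iota 0 n] = n%:R * mr mu C.
Proof.
move=> mC; rewrite /sI big_map.
rewrite (eq_bigr (fun=> mr mu C)); last by move=> i _; rewrite mul1r iter_mr.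
have -> : iota 0 n = index_iota 0 n by rewrite /index_iota subn0.
by rewrite sumr_const_nat subn0 mulr_natl.
Qed.

Lemma cnt_good C n : measurable C -> good [seq ((1 : R), iter i S @^-1` C) | i <- iota 0 n].
Proof. move=> mC; apply: good_map => // i; exact: iter_preim_meas. Qed.

Lemma meas_le (f : X -> R) (a : R) : measurable_fun setT f -> measurable [set x | f x <= a].
Proof.
move=> mf; have -> : [set x | f x <= a] = f @^-1` `]-oo, a].
  by apply/seteqP; split => x /=; rewrite in_itv.
rewrite -[X in measurable X]setTI; apply: mf => //; exact: measurable_itv.
Qed.

Lemma meas_ge (f : X -> R) (a : R) : measurable_fun setT f -> measurable [set x | a <= f x].
Proof.
move=> mf; have -> : [set x | a <= f x] = f @^-1` `[a, +oo[.
  by apply/seteqP; split => x /=; rewrite in_itv /= andbT.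
rewrite -[X in measurable X]setTI; apply: mf => //; exact: measurable_itv.
Qed.

Definition Ebad C (t : R) N := [set x | forall n, (0 < n)%N -> (n <= N)%N -> cnt C n x <= n%:R * t].

Lemma Ebad_meas C t N : measurable C -> measurable (Ebad C t N).
Proof.
move=> mC.
have -> : Ebad C t N = \bigcap_n [set x | (0 < n)%N -> (n <= N)%N -> cnt C n x <= n%:R * t].
  by apply/seteqP; split => x /= h; [move=> n _; exact: h | move=> n; exact: (h n)].
apply: bigcapT_measurable => n.
have [/andP[n0 nN]|hn] := boolP ((0 < n)%N && (n <= N)%N).
  have -> : [set x | (0 < n)%N -> (n <= N)%N -> cnt C n x <= n%:R * t] = [set x | cnt C n x <= n%:R * t].
    by apply/seteqP; split => x /= h; [exact: h | move=> _ _].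
  apply: meas_le; exact: cnt_meas.
have -> : [set x | (0 < n)%N -> (n <= N)%N -> cnt C n x <= n%:R * t] = setT.
  apply/seteqP; split => x // _ /= n0 nN; exfalso; move/negP: hn; apply; rewrite n0 nN.
  by []. exact: measurableT.
Qed.

Lemma tiling C t N : 0 <= t <= 1 -> forall L x,
  (L%:R - N%:R) * t <= cnt C L x + cnt (Ebad C t N) L x.
Proof.
move=> /andP[t0 t1] L; elim/ltn_ind: L => L IH x.
have g1 := cnt_ge0 C L x; have g2 := cnt_ge0 (Ebad C t N) L x.
have [LN|NL] := leqP L N.
  have : (L%:R : R) <= N%:R by rewrite ler_nat.
  nra.
have L0 : (0 < L)%N by apply: leq_ltn_trans NL.
case: (pselect (Ebad C t N x)) => hE.
  have hlt : (L.-1 < L)%N by rewrite ltn_predL.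
  have := IH _ hlt (S x).
  rewrite -(prednK L0) !cntS.
  have -> : \1_(Ebad C t N) x = 1 :> R by rewrite indicE mem_set.
  have : 0 <= \1_C x :> R by rewrite indicE.
  have -> : ((L.-1).+1%:R : R) = L.-1%:R + 1 by rewrite -natr1.
  move=> *; nra.
case: (pselect (exists n, [/\ (0 < n)%N, (n <= N)%N & n%:R * t < cnt C n x])); last first.
  move=> hne; exfalso; apply: hE => n n0 nN; rewrite leNgt; apply/negP => hlt.
  by apply: hne; exists n; split.
move=> [n [n0 nN hn]].
have nL : (n <= L)%N by apply: (leq_trans nN); exact: ltnW.
rewrite -(subnKC nL) !cnt_split.
have hlt : (L - n < L)%N by rewrite ltn_subrL n0 L0.
have := IH _ hlt (iter n S x).
have := cnt_ge0 (Ebad C t N) n x.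
have -> : ((n + (L - n))%:R : R) = n%:R + (L - n)%:R by rewrite natrD.
move=> *; nra.
Qed.

Lemma tiling_int C t N : measurable C -> 0 <= t <= 1 -> t <= mr mu C + mr mu (Ebad C t N).
Proof.
move=> mC t01; have /andP[t0 t1] := t01.
set m := mr mu C + mr mu (Ebad C t N).
rewrite leNgt; apply/negP => mt.
have tm0 : 0 < t - m by rewrite subr_gt0.
have Nt0 : 0 <= N%:R * t / (t - m) by rewrite divr_ge0 ?mulr_ge0 // ltW.
set k := Num.Def.archi_bound (N%:R * t / (t - m)).
have hk := archi_boundP Nt0; rewrite -/k in hk.
set L := (N + k).+1.
have key : (L%:R - N%:R) * t <= L%:R * m.
  have mE : measurable (Ebad C t N) by exact: Ebad_meas.
  have := @sf_le _ _ _ mu [:: ((L%:R - N%:R) * t, setT)]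
    ([seq ((1 : R), iter i S @^-1` C) | i <- iota 0 L] ++ [seq ((1 : R), iter i S @^-1` (Ebad C t N)) | i <- iota 0 L]).
  rewrite sI_cat !cnt_sI // /sI big_cons big_nil mrT addr0 mulr1 -mulrDr.
  apply.
  - rewrite /= ; split => //; split => //; rewrite mulr_ge0 // subr_ge0 ler_nat /L; apply: leq_trans (leqnSn _); exact: leq_addr.
  - apply: good_cat; exact: cnt_good.
  - move=> x; rewrite sf_cat -!cnt_sf /sf big_cons big_nil addr0 indicE mem_set // mulr1.
    exact: tiling.
have hL : (k%:R : R) <= L%:R by rewrite ler_nat /L; apply: leq_trans (leqnSn _); exact: leq_addl.
have : N%:R * t < L%:R * (t - m).
  rewrite -ltr_pdivrMr //; exact: (lt_le_trans hk).
nra.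
Qed.


Lemma dec_small (F : nat -> set X) : (forall i, measurable (F i)) ->
  (forall n m, (n <= m)%N -> F m `<=` F n) -> mu (\bigcap_n F n) = 0%E ->
  forall e : R, 0 < e -> exists N, forall n, (N <= n)%N -> mr mu (F n) <= e.
Proof.
move=> mF dF F0 e e0.
have hF0 : (mu (F 0%N) < +oo)%E by rewrite (le_lt_trans (probability_le1 mu (mF 0%N))) // ltry.
have hd : {homo F : n m / (n <= m)%N >-> (m <= n)%O}.
  by move=> n m nm; apply/subsetPset; exact: dF.
have := @nonincreasing_cvg_mu _ _ _ mu F hF0 mF (bigcapT_measurable mF) hd.
rewrite [X in _ --> X](_ : _ = 0%E); last exact: F0.
move=> /fine_cvgP [_ /eps_cvg /(_ e e0)] [N HN].
exists N => n Nn; have := HN n Nn; rewrite subr0 /mr /=.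
by move=> h; apply: le_trans (ler_norm _) h.
Qed.



Lemma Ebad_dec C t n m : (n <= m)%N -> Ebad C t m `<=` Ebad C t n.
Proof. by move=> nm x h k k0 kn; apply: h => //; exact: leq_trans kn nm. Qed.

Lemma upper_from_null C t : measurable C -> 0 <= t <= 1 ->
  mu (\bigcap_N Ebad C t N) = 0%E -> t <= mr mu C.
Proof.
move=> mC t01 h0; apply/ler_addgt0Pr => e e0.
have [N HN] := dec_small (fun N => Ebad_meas t N mC) (fun n m => @Ebad_dec C t n m) h0 e0.
have := tiling_int N mC t01; have := HN N (leqnn N); lra.
Qed.

Definition Gs C (t : R) := [set x | forall M : nat, exists n, M%:R <= cnt C n x - n%:R * t].

Lemma Gs_meas C t : measurable C -> measurable (Gs C t).
Proof.
move=> mC.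
have -> : Gs C t = \bigcap_M \bigcup_n [set x | M%:R <= (cnt C n \- cst (n%:R * t)) x].
  apply/seteqP; split => x /= h M.
    by move=> _; have [n hn] := h M; exists n.
  by have [n _ hn] := h M I; exists n.
apply: bigcapT_measurable => M; apply: bigcupT_measurable => n.
apply: meas_ge; apply: measurable_funB; [exact: cnt_meas | exact: measurable_cst].
Qed.

Lemma nat_above (r : R) : exists M : nat, r <= M%:R.
Proof.
have [r0|r0] := leP 0 r.
  by exists (Num.Def.archi_bound r); apply: ltW; exact: archi_boundP.
by exists 0%N; rewrite ltW.
Qed.

Lemma Gs_inv C t : S @^-1` Gs C t = Gs C t.
Proof.
have b x : `|t - \1_C x| <= `|t| + 1.
  apply: (le_trans (ler_normB _ _)); rewrite lerD2l indicE; case: (_ \in _) => //=.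
  by rewrite normr1. by rewrite normr0.
have key x n : cnt C n (S x) - n%:R * t = cnt C n.+1 x - n.+1%:R * t + (t - \1_C x).
  by rewrite cntS -natr1; ring.
apply/seteqP; split => x /= h M.
- have [M' hM'] := nat_above (M%:R + `|t| + 1).
  have [n hn] := h M'; exists n.+1.
  have := key x n; have := b x; have := ler_norm (t - \1_C x).
  move=> *; lra.
- have [M' hM'] := nat_above (M%:R + `|t| + 1).
  have [n hn] := h M'.
  case: n hn => [|n] hn.
    exfalso; move: hn; rewrite cnt0 (_ : (0%:R : R) = 0) // mul0r subr0; have := normr_ge0 t; have := ler0n R M; lra.
  exists n; have := key x n; have := b x; have := ler_norm (- (t - \1_C x)).
  rewrite normrN; move=> *; lra.
Qed.

Lemma Gs_Einf C t : Gs C t `<=` ~` (\bigcap_N Ebad C t N).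
Proof.
move=> x h hE; have [n hn] := h 1%N.
case: n hn => [|n] hn.
  by move: hn; rewrite cnt0 mul0r subr0; lra.
have := hE n.+1 I n.+1 (ltn0Sn n) (leqnn _); lra.
Qed.

Hypothesis erg : forall A, measurable A -> S @^-1` A = A -> mu A = 0%E \/ mu A = 1%E.

Lemma G_null C t : measurable C -> mr mu C < t -> mu (Gs C t) = 0%E.
Proof.
move=> mC ct.
have mG := Gs_meas t mC.
have [t1|t1] := leP t 1; last first.
  suff -> : Gs C t = set0 by rewrite measure0.
  apply/seteqP; split => // x h; have [n hn] := h 1%N.
  have := cnt_le C n x; have : (0 : R) <= n%:R by [].
  move=> *; nra.
case: (erg mG (Gs_inv C t)) => // h1; exfalso.
have mE : measurable (\bigcap_N Ebad C t N) by apply: bigcapT_measurable => N; exact: Ebad_meas.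
have h0 : mu (\bigcap_N Ebad C t N) = 0%E.
  have sub : \bigcap_N Ebad C t N `<=` ~` Gs C t by move=> x hx hg; exact: (Gs_Einf hg hx).
  have hle := mr_le mu mE (measurableC mG) sub.
  rewrite mrC // (_ : mr mu (Gs C t) = 1) in hle; last by rewrite /mr h1.
  have := mr_ge0 mu (\bigcap_N Ebad C t N).
  rewrite (mrE mu mE) => hge; congr (_%:E); lra.
have := upper_from_null mC _ h0.
have t0 : 0 <= t by apply: le_trans (ltW ct); exact: mr_ge0.
rewrite t0 t1 => /(_ isT); lra.
Qed.


Definition Bad C (c e : R) M := [set x | exists n, (M <= n)%N /\ n%:R * (c + e) < cnt C n x].

Lemma Bad_meas C c e M : measurable C -> measurable (Bad C c e M).
Proof.
move=> mC.
have -> : Bad C c e M = \bigcup_n (if (M <= n)%N then ~` [set x | cnt C n x <= n%:R * (c + e)] else set0).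
  apply/seteqP; split => x /=.
    by move=> [n [Mn hn]]; exists n => //; rewrite Mn /= => hle; move: hn; rewrite ltNge hle.
  move=> [n _]; case: ifP => // Mn hn; exists n; split => //.
  by rewrite ltNge; apply/negP => h; exact: hn h.
apply: bigcupT_measurable => n; case: ifP => _ //.
apply: measurableC; apply: meas_le; exact: cnt_meas.
Qed.

Lemma Bad_dec C c e n m : (n <= m)%N -> Bad C c e m `<=` Bad C c e n.
Proof. by move=> nm x [k [mk hk]]; exists k; split => //; exact: leq_trans mk. Qed.

Lemma Bad_G C c e : 0 < e -> \bigcap_M Bad C c e M `<=` Gs C (c + e / 2).
Proof.
move=> e0 x hx M'.
have [M hM] := nat_above (2 * M'%:R / e).
have [n [Mn hn]] := hx M I.
exists n.
have : (M%:R : R) <= n%:R by rewrite ler_nat.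
have : M'%:R <= M%:R * e / 2.
  rewrite ler_pdivlMr //; rewrite ler_pdivrMr // in hM; lra.
have := ler0n R M'.
move=> *; nra.
Qed.

Lemma Bad_small C e : measurable C -> 0 < e ->
  exists M, mr mu (Bad C (mr mu C) e M) <= e.
Proof.
move=> mC e0.
have h0 : mu (\bigcap_M Bad C (mr mu C) e M) = 0%E.
  have mI : measurable (\bigcap_M Bad C (mr mu C) e M).
    by apply: bigcapT_measurable => M; exact: Bad_meas.
  have mG := Gs_meas (mr mu C + e / 2) mC.
  have hlt : mr mu C < mr mu C + e / 2 by rewrite ltrDl divr_gt0.
  have hG := G_null mC hlt.
  have := mr_le mu mI mG (Bad_G e0).
  rewrite /mr hG /= => hle.
  have := mr_ge0 mu (\bigcap_M Bad C (mr mu C) e M).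
  rewrite (mrE mu mI) => hge; congr (_%:E); apply/eqP; rewrite eq_le hge andbT.
  exact: hle.
have [M HM] := dec_small (fun M => Bad_meas (mr mu C) e M mC) (fun n m => @Bad_dec C _ e n m) h0 e0.
by exists M; exact: HM.
Qed.

Lemma upper_avg B C e : measurable B -> measurable C -> 0 < e ->
  exists N0, forall n, (N0 <= n)%N ->
    mean (fun i => mr mu (B `&` iter i S @^-1` C)) n <= (mr mu C + e) * mr mu B + e.
Proof.
move=> mB mC e0.
have [M HM] := Bad_small mC e0.
set c := mr mu C in HM *.
exists (maxn M 1) => n; rewrite geq_max => /andP[Mn n0].
have mBad := Bad_meas c e M mC.
have c0 : 0 <= c by exact: mr_ge0.
have := @sf_le _ _ _ mu [seq ((1 : R), B `&` iter i S @^-1` C) | i <- iota 0 n]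
   [:: (n%:R * (c + e), B); (n%:R, Bad C c e M)].
rewrite /sI big_map big_cons big_cons big_nil addr0.
have -> : \sum_(j <- iota 0 n) 1 * mr mu (B `&` iter j S @^-1` C) =
     \sum_(i < n) mr mu (B `&` iter i S @^-1` C).
  have -> : iota 0 n = index_iota 0 n by rewrite /index_iota subn0.
  by rewrite big_mkord; apply: eq_bigr => i _; rewrite mul1r.
move=> /(_ _ _ _) H.
have : \sum_(i < n) mr mu (B `&` iter i S @^-1` C) <= n%:R * (c + e) * mr mu B + n%:R * mr mu (Bad C c e M).
  apply: H.
  - apply: good_map => // i; apply: measurableI => //; exact: iter_preim_meas.
  - by split; [split => //; rewrite mulr_ge0 // addr_ge0 // ltW | split => //].
  move=> x; rewrite /sf big_map big_cons big_cons big_nil addr0.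
  have -> : \sum_(j <- iota 0 n) 1 * \1_(B `&` iter j S @^-1` C) x = \1_B x * cnt C n x.
    rewrite cnt_sf /sf big_map mulr_sumr; apply: eq_bigr => i _.
    by rewrite indicI /= !mul1r.
  rewrite !indicE; case: (boolP (x \in B)) => xB; last by rewrite mul0r mulr0 add0r mulr_ge0.
  rewrite mul1r mulr1; case: (boolP (x \in Bad C c e M)) => xb.
    rewrite mulr1; have := cnt_le C n x; have := ler0n R n.
    move=> h1 h2 /=; have := ltW e0; nra.
  rewrite mulr0 addr0 leNgt; apply/negP => hlt; move/negP: xb; apply.
  by rewrite mem_set //; exists n.
have nR : (0 : R) < n%:R by rewrite ltr0n.
move=> hs; rewrite /mean.
rewrite -(ler_pM2l nR) mulrA mulfV ?gt_eqF // mul1r.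
apply: (le_trans hs).
have := mr_ge0 mu B.
move=> *; nra.
Qed.


Lemma mean_ergodic B C : measurable B -> measurable C ->
  avg mu S B C @ \oo --> mr mu B * mr mu C.
Proof.
move=> mB mC; apply: cvg_eps => e e0.
have e4 : 0 < e / 4 by rewrite divr_gt0.
have [N1 H1] := upper_avg mB mC e4.
have [N2 H2] := upper_avg mB (measurableC mC) e4.
exists (maxn (maxn N1 N2) 1) => n; rewrite !geq_max => /andP[/andP[n1 n2] n0].
have h1 := H1 n n1; have h2 := H2 n n2.
have E : (fun i => mr mu (B `&` iter i S @^-1` ~` C)) =
    (fun i => mr mu B - mr mu (B `&` iter i S @^-1` C)).
  apply/funext => i; rewrite preimage_setC -setDE mrD //; exact: iter_preim_meas.
rewrite E meanB meanC // mrC // in h2.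
have b0 := mr_ge0 mu B; have b1 := mr_le1 mu mB.
have c0 := mr_ge0 mu C; have c1 := mr_le1 mu mC.
have -> : avg mu S B C n = mean (fun i => mr mu (B `&` iter i S @^-1` C)) n by [].
set m := mean _ n in h1 h2 *.
rewrite ler_norml; apply/andP; split; nra.
Qed.


End Iter.

Section Gen.
Context (R : realType).
Lemma zero_small (x : R) : (forall e : R, 0 < e -> `|x| <= e) -> x = 0.
Proof.
move=> H; apply/normr0_eq0/eqP; rewrite eq_le normr_ge0 andbT.
apply/ler_addgt0Pr => e e0; rewrite add0r; exact: H.
Qed.

Lemma lim_uniq (u : nat -> R) (a b : R) : u @ \oo --> a -> u @ \oo --> b -> a = b.
Proof.
move=> /eps_cvg ha /eps_cvg hb; apply/eqP; rewrite -subr_eq0; apply/eqP/zero_small => e e0.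
have e2 : 0 < e / 2 by rewrite divr_gt0.
have [N1 h1] := ha _ e2; have [N2 h2] := hb _ e2.
have := h1 (maxn N1 N2) (leq_maxl _ _); have := h2 (maxn N1 N2) (leq_maxr _ _).
set v := u _ => p q.
have : `|a - b| <= `|v - a| + `|v - b|.
  rewrite (_ : a - b = - (v - a) + (v - b)); last by ring.
  by apply: le_trans (ler_normD _ _) _; rewrite normrN.
lra.
Qed.

Lemma mr_cvg_up d (X : measurableType d) (mu : probability X R) (F : (set X)^nat) :
  (forall i, measurable (F i)) -> nondecreasing_seq F ->
  (fun n => mr mu (F n)) @ \oo --> mr mu (\bigcup_n F n).
Proof.
move=> mF ndF.
have := @nondecreasing_cvg_mu _ _ _ mu F mF (bigcupT_measurable _ mF) ndF.
rewrite [X in _ --> X](_ : _ = (mr mu (\bigcup_n F n))%:E); last first.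
  exact: (mrE mu (bigcupT_measurable _ mF)).
by move=> /fine_cvgP [].
Qed.
Lemma approx (u : nat -> R) (L : R) :
  (forall e : R, 0 < e -> exists (v : nat -> R) (l : R),
     [/\ v @ \oo --> l, `|l - L| <= e & forall n, `|u n - v n| <= e]) ->
  u @ \oo --> L.
Proof.
move=> H; apply: cvg_eps => e e0.
have e3 : 0 < e / 3 by rewrite divr_gt0.
have [v [l [hv hl huv]]] := H _ e3.
have [N HN] := eps_cvg hv e3.
exists N => n Nn; have := HN n Nn; have := huv n.
have : `|u n - L| <= `|u n - v n| + `|v n - l| + `|l - L|.
  rewrite (_ : u n - L = (u n - v n) + (v n - l) + (l - L)); last by ring.
  apply: le_trans (ler_normD _ _) _; rewrite lerD2r; exact: ler_normD.
lra.
Qed.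

Lemma mean_bound (x : nat -> R) (dl : R) n : 0 <= dl -> (forall i, `|x i| <= dl) -> `|mean x n| <= dl.
Proof.
move=> d0 hx; apply: le_trans (norm_mean _ _) _.
case: n => [|n]; first by rewrite /mean big_ord0 mulr0.
by rewrite -(meanC dl (ltn0Sn n)); apply: mean_le.
Qed.

Lemma mr_diff_le d (X : measurableType d) (mu : probability X R) (U V Y : set X) :
  measurable U -> measurable V -> measurable Y -> V `<=` U ->
  0 <= mr mu (Y `&` U) - mr mu (Y `&` V) <= mr mu U - mr mu V.
Proof.
move=> mU mV mY VU.
have mYU : measurable (Y `&` U) by exact: measurableI.
have E1 : mr mu (Y `&` U) - mr mu (Y `&` V) = mr mu ((Y `&` U) `\` V).
  by rewrite mrD // (_ : Y `&` U `&` V = Y `&` V) // -setIA (setIidr VU).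
have E2 : mr mu U - mr mu V = mr mu (U `\` V).
  by rewrite mrD // (setIidr VU).
rewrite E1 E2 mr_ge0 /=; apply: mr_le; try exact: measurableD.
by move=> x [[_ h1] h2]; split.
Qed.

Lemma mrD_sub d (X : measurableType d) (mu : probability X R) (A B Y : set X) :
  measurable A -> measurable B -> measurable Y -> A `<=` B ->
  mr mu (Y `&` (B `\` A)) = mr mu (Y `&` B) - mr mu (Y `&` A).
Proof.
move=> mA mB mY AB.
have -> : Y `&` (B `\` A) = (Y `&` B) `\` A.
  by apply/seteqP; split => x /= [h1 h2]; [move: h2 => [h2 h3] | move: h1 => [h1 h3]].
rewrite mrD //; last exact: measurableI.
by rewrite -setIA (setIidr AB).
Qed.

End Gen.

Section Prod.
Context d (O : measurableType d) (R : realType) (P : probability O R).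
Variable T : O -> O.
Hypothesis mT : measurable_fun setT T.
Hypothesis pT : forall A, measurable A -> P (T @^-1` A) = P A.

Definition mu2 : probability (O * O)%type R := (P \x P)%E.
Definition S2 (xy : O * O) : O * O := (T xy.1, T xy.2).

Lemma mS2 : measurable_fun setT S2.
Proof.
apply: measurable_fun_pair.
  exact: measurableT_comp mT measurable_fst.
exact: measurableT_comp mT measurable_snd.
Qed.

Lemma iter_S2 n xy : iter n S2 xy = (iter n T xy.1, iter n T xy.2).
Proof. by elim: n => [|n IH] /=; [case: xy | rewrite IH]. Qed.

Lemma rect_preim n (A B C D : set O) :
  (A `*` B) `&` iter n S2 @^-1` (C `*` D) = (A `&` iter n T @^-1` C) `*` (B `&` iter n T @^-1` D).
Proof.
apply/seteqP; split => -[x y] /=; rewrite /preimage /= iter_S2 /=.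
  by move=> [[ha hb] [hc hd]].
by move=> [[ha hc] [hb hd]].
Qed.

Lemma mr2_rect A B : measurable A -> measurable B -> mr mu2 (A `*` B) = mr P A * mr P B.
Proof.
move=> mA mB; rewrite /mr /mu2 /= product_measure1E //.
by rewrite fineM // fin_num_measure.
Qed.

Lemma prod_ind (Pr : set (O * O) -> Prop) :
  (forall A B, measurable A -> measurable B -> Pr (A `*` B)) ->
  (forall A B, measurable A -> measurable B -> A `<=` B -> Pr A -> Pr B -> Pr (B `\` A)) ->
  (forall F : (set (O * O))^nat, (forall i, measurable (F i)) -> nondecreasing_seq F ->
     (forall i, Pr (F i)) -> Pr (\bigcup_i F i)) ->
  forall A, measurable A -> Pr A.
Proof.
move=> hR hD hU.
set G := [set A `*` B | A in @measurable _ O & B in @measurable _ O].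
have GI : setI_closed G.
  move=> _ _ [A1 mA1 [B1 mB1 <-]] [A2 mA2 [B2 mB2 <-]].
  rewrite -setXI; exists (A1 `&` A2); first exact: measurableI.
  by exists (B1 `&` B2) => //; exact: measurableI.
set H := [set A | measurable A /\ Pr A].
have lam : lambda_system setT H.
  split.
  - by move=> A _.
  - split => //; rewrite -setXTT; exact: hR.
  - move=> A B BA [mA hA] [mB hB]; split; first exact: measurableD.
    exact: hD.
  - move=> F ndF hF; split; first by apply: bigcupT_measurable => i; case: (hF i).
    apply: hU => //; first by move=> i; case: (hF i).
    by move=> i; case: (hF i).
have GH : G `<=` H.
  move=> _ [A mA [B mB <-]]; split; first exact: measurableX.
  exact: hR.
have := lambda_system_subset GI lam GH.
move=> /(_ (fun _ _ _ _ => I)) sub A mA.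
have : <<s G >> A.
  by rewrite -measurable_prod_measurableType.
by move=> /sub [].
Qed.

Lemma pS2 A : measurable A -> mu2 (S2 @^-1` A) = mu2 A.
Proof.
move=> mA.
have mSA : forall A, measurable A -> measurable (S2 @^-1` A).
  by move=> B mB; rewrite -[X in measurable X]setTI; exact: mS2.
suff : mr mu2 (S2 @^-1` A) = mr mu2 A.
  by move=> h; rewrite (mrE mu2 (mSA _ mA)) (mrE mu2 mA) h.
move: A mA; apply: prod_ind.
- move=> A B mA mB.
  have -> : S2 @^-1` (A `*` B) = (T @^-1` A) `*` (T @^-1` B) by [].
  rewrite !mr2_rect //; try by rewrite -[X in measurable X]setTI; exact: mT.
  by rewrite /mr !pT.
- move=> A B mA mB AB hA hB.
  have -> : S2 @^-1` (B `\` A) = S2 @^-1` B `\` S2 @^-1` A by [].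
  rewrite !mrD //; try exact: mSA.
  by rewrite !setIidr // ?hA ?hB //; exact: preimage_subset.
- move=> F mF ndF hF.
  have h1 := mr_cvg_up (mu := mu2) mF ndF.
  have ndF' : nondecreasing_seq (fun n => S2 @^-1` F n).
    by move=> n m nm; apply/subsetPset; apply: preimage_subset; apply/subsetPset; exact: ndF.
  have h2 := mr_cvg_up (mu := mu2) (fun i => mSA _ (mF i)) ndF'.
  have -> : S2 @^-1` (\bigcup_i F i) = \bigcup_i (S2 @^-1` F i) by [].
  apply: (lim_uniq h2).
  by under eq_fun do rewrite hF.
Qed.

Lemma S2_iter_mr n A : measurable A -> mr mu2 (iter n S2 @^-1` A) = mr mu2 A.
Proof. exact: (iter_mr mS2 pS2). Qed.


Definition aseq (B C : set O) (i : nat) : R := mr P (B `&` iter i T @^-1` C).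

Lemma aseq01 B C i : measurable B -> measurable C -> 0 <= aseq B C i <= 1.
Proof.
move=> mB mC; rewrite /aseq mr_ge0 mr_le1 //; apply: measurableI => //.
exact: (iter_preim_meas mT).
Qed.

Lemma avg_aseq B C n : avg P T B C n = mean (aseq B C) n.
Proof. by []. Qed.

Lemma avg_pow_aseq r B C n : avg_pow P T r B C n = mean (fun i => aseq B C i `^ r) n.
Proof. by []. Qed.

Lemma avg2_rect A B C D n : measurable A -> measurable B -> measurable C -> measurable D ->
  avg mu2 S2 (A `*` B) (C `*` D) n = mean (fun i => aseq A C i * aseq B D i) n.
Proof.
move=> mA mB mC mD; rewrite /avg /mean; congr (_ * _); apply: eq_bigr => i _.
rewrite -/(mr mu2 _) rect_preim mr2_rect //; apply: measurableI => //; exact: (iter_preim_meas mT).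
Qed.

Hypothesis wm : ergodic mu2 S2.

Lemma wm_ergodic : ergodic P T.
Proof.
move=> A mA hA.
have mAT : measurable (A `*` [set: O]) by exact: measurableX.
have h : S2 @^-1` (A `*` setT) = A `*` setT.
  by rewrite (_ : S2 @^-1` (A `*` setT) = (T @^-1` A) `*` (T @^-1` setT)) // hA.
have := wm mAT h.
rewrite /mu2 /= product_measure1E //.
have E : (P A * P [set: O])%E = P A.
  rewrite -[RHS]mule1; congr (_ * _)%E; exact: probability_setT.
by rewrite E.
Qed.

Lemma wm_sq B C : measurable B -> measurable C ->
  mean (fun i => aseq B C i ^+ 2) @ \oo --> (mr P B * mr P C) ^+ 2.
Proof.
move=> mB mC.
have := mean_ergodic (mu := mu2) (S := S2) mS2 pS2 wm (measurableX mB mB) (measurableX mC mC).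
rewrite !mr2_rect // (_ : mr P B * mr P B * (mr P C * mr P C) = (mr P B * mr P C) ^+ 2); last by ring.
move=> h; apply: cvg_trans h; apply: near_eq_cvg; near=> n.
rewrite avg2_rect //; congr mean; apply/funext => i; by rewrite expr2.
Unshelve. all: end_near.
Qed.

Lemma wm_abs B C : measurable B -> measurable C ->
  mean (fun i => `|aseq B C i - mr P B * mr P C|) @ \oo --> 0.
Proof.
move=> mB mC; apply: mean_sq_abs; apply: mean_sq0; last exact: wm_sq.
exact: (mean_ergodic mT pT wm_ergodic).
Qed.


Section Conv.
Hypothesis hab : forall B C, measurable B -> measurable C ->
  mean (fun i => `|aseq B C i - mr P B * mr P C|) @ \oo --> 0.

Let Q E G := avg mu2 S2 E G @ \oo --> mr mu2 E * mr mu2 G.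

Let mpre n A : measurable A -> measurable (iter n S2 @^-1` A).
Proof. exact: (iter_preim_meas mS2). Qed.

Lemma Q_rect A B C D : measurable A -> measurable B -> measurable C -> measurable D ->
  Q (A `*` B) (C `*` D).
Proof.
move=> mA mB mC mD; rewrite /Q !mr2_rect //.
have -> : mr P A * mr P B * (mr P C * mr P D) = (mr P A * mr P C) * (mr P B * mr P D) by ring.
apply: cvg_trans (mean_prod _ _ (hab mA mC) (hab mB mD)).
  by apply: near_eq_cvg; near=> n; rewrite avg2_rect.
- move=> i; have /andP[h1 h2] := aseq01 i mB mD; rewrite ger0_norm //.
- rewrite ger0_norm ?mulr_ge0 ?mr_ge0 //; rewrite -[1]mulr1 ler_pM ?mr_ge0 ?mr_le1 //.
Unshelve. all: end_near.
Qed.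

Lemma Q_E G : measurable G -> (forall A B, measurable A -> measurable B -> Q (A `*` B) G) ->
  forall E, measurable E -> Q E G.
Proof.
move=> mG hG; apply: prod_ind => //.
- move=> A B mA mB AB hA hB; rewrite /Q.
  have E : avg mu2 S2 (B `\` A) G = fun n => avg mu2 S2 B G n - avg mu2 S2 A G n.
    apply/funext => n; rewrite /avg -mulrBr -sumrB; congr (_ * _); apply: eq_bigr => i _.
    rewrite -!/(mr mu2 _) setIC mrD_sub // 1?setIC; last exact: mpre.
    by rewrite [X in _ - mr _ X]setIC.
  rewrite E (_ : mr mu2 (B `\` A) = mr mu2 B - mr mu2 A); last by rewrite mrD // (setIidr AB).
  rewrite mulrBl; exact: cvgB.
- move=> F mF ndF hF; rewrite /Q; apply: approx => e e0.
  have mU : measurable (\bigcup_i F i) by exact: bigcupT_measurable.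
  have [k hk] := eps_cvg (mr_cvg_up (mu := mu2) mF ndF) e0.
  have := hk k (leqnn k) => {hk} hk.
  have FkU : F k `<=` \bigcup_i F i by move=> x h; exists k.
  have hd : 0 <= mr mu2 (\bigcup_i F i) - mr mu2 (F k).
    by rewrite subr_ge0; apply: mr_le.
  rewrite distrC ger0_norm // in hk.
  exists (avg mu2 S2 (F k) G), (mr mu2 (F k) * mr mu2 G); split.
  + exact: hF.
  + rewrite -mulrBl normrM (ger0_norm (mr_ge0 _ _)) distrC ger0_norm //.
    by rewrite -[X in _ <= X]mulr1 ler_pM ?mr_ge0 ?mr_le1.
  + move=> n; rewrite /avg -mulrBr -sumrB.
    apply: (@mean_bound _ (fun i => mr mu2 (\bigcup_i F i `&` iter i S2 @^-1` G) - mr mu2 (F k `&` iter i S2 @^-1` G)) e n (ltW e0)) => i.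
    rewrite ![_ `&` iter i S2 @^-1` G]setIC.
    have := mr_diff_le mu2 mU (mF k) (mpre i mG) FkU.
    move=> /andP[h1 h2]; rewrite ger0_norm //; lra.
Qed.

Lemma Q_all E G : measurable E -> measurable G -> Q E G.
Proof.
move=> mE mG; move: G mG; apply: prod_ind => //.
- move=> C D mC mD; apply: Q_E => //; first exact: measurableX.
  move=> A B mA mB; exact: Q_rect.
- move=> A B mA mB AB hA hB; rewrite /Q.
  have EE : avg mu2 S2 E (B `\` A) = fun n => avg mu2 S2 E B n - avg mu2 S2 E A n.
    apply/funext => n; rewrite /avg -mulrBr -sumrB; congr (_ * _); apply: eq_bigr => i _.
    rewrite -!/(mr mu2 _).
    have -> : iter i S2 @^-1` (B `\` A) = iter i S2 @^-1` B `\` iter i S2 @^-1` A by [].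
    rewrite mrD_sub //; try exact: mpre.
    exact: preimage_subset.
  rewrite EE (_ : mr mu2 (B `\` A) = mr mu2 B - mr mu2 A); last by rewrite mrD // (setIidr AB).
  rewrite mulrBr; exact: cvgB.
- move=> F mF ndF hF; rewrite /Q; apply: approx => e e0.
  have mU : measurable (\bigcup_i F i) by exact: bigcupT_measurable.
  have [k hk] := eps_cvg (mr_cvg_up (mu := mu2) mF ndF) e0.
  have := hk k (leqnn k) => {hk} hk.
  have FkU : F k `<=` \bigcup_i F i by move=> x h; exists k.
  have hd : 0 <= mr mu2 (\bigcup_i F i) - mr mu2 (F k).
    by rewrite subr_ge0; apply: mr_le.
  rewrite distrC ger0_norm // in hk.
  exists (avg mu2 S2 E (F k)), (mr mu2 E * mr mu2 (F k)); split.
  + exact: hF.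
  + rewrite -mulrBr normrM (ger0_norm (mr_ge0 _ _)) distrC ger0_norm //.
    by rewrite -[X in _ <= X]mul1r ler_pM ?mr_ge0 ?mr_le1.
  + move=> n; rewrite /avg -mulrBr -sumrB.
    apply: (@mean_bound _ (fun i => mr mu2 (E `&` iter i S2 @^-1` \bigcup_i F i) - mr mu2 (E `&` iter i S2 @^-1` F k)) e n (ltW e0)) => i.
    have := mr_diff_le mu2 (mpre i mU) (mpre i (mF k)) mE (preimage_subset FkU).
    rewrite !S2_iter_mr // => /andP[h1 h2]; rewrite ger0_norm //; lra.
Qed.

Lemma conv_ergodic : ergodic mu2 S2.
Proof.
move=> E mE hE.
have hiter n : iter n S2 @^-1` E = E.
  elim: n => [|n IH] //=.
  have -> : (fun x => S2 (iter n S2 x)) @^-1` E = iter n S2 @^-1` (S2 @^-1` E) by [].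
  by rewrite hE IH.
have h1 := Q_all mE mE.
have h2 : avg mu2 S2 E E @ \oo --> mr mu2 E.
  apply: cvg_eps => e e0; exists 1%N => n n1.
  have -> : avg mu2 S2 E E n = mean (fun=> mr mu2 E) n.
    rewrite /avg /mean; congr (_ * _); apply: eq_bigr => i _.
    by rewrite hiter setIid.
  by rewrite meanC // subrr normr0 ltW.
have := lim_uniq h1 h2 => heq.
have : mr mu2 E * (1 - mr mu2 E) = 0 by rewrite mulrBr mulr1 heq subrr.
move/eqP; rewrite mulf_eq0 => /orP[/eqP h0|].
  by left; rewrite (mrE mu2 mE) h0.
rewrite subr_eq0 => /eqP h0; right; by rewrite (mrE mu2 mE) -h0.
Qed.

End Conv.

End Prod.

Section Key.
Variable R : realType.

Lemma key_conv (x : nat -> R) (c r : R) : (forall i, 0 <= x i <= 1) -> 0 <= c <= 1 ->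
  0 < r -> r <= 2^-1 ->
  mean x @ \oo --> c -> mean (fun i => x i `^ r) @ \oo --> c `^ r ->
  mean (fun i => `|x i - c|) @ \oo --> 0.
Proof.
move=> x01 /andP[c0 c1] r0 rh hx hxr.
move: c0 hx hxr; rewrite le_eqVlt => /predU1P[<-|cpos] hx hxr.
  have -> : (fun i => `|x i - 0|) = x.
    by apply/funext => i; rewrite subr0 ger0_norm //; case/andP: (x01 i).
  exact: hx.
set s := r * 2.
have s0 : 0 < s by rewrite mulr_gt0.
have s1 : s <= 1 by rewrite /s -ler_pdivlMr // div1r.
set u := fun i => x i `^ r.
set t := c `^ r.
have u01 i : 0 <= u i <= 1 by rewrite /u powR_ge0 powR_le1.
have t01 : 0 <= t <= 1 by rewrite /t powR_ge0 /= powR_le1 // (ltW cpos) c1.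
have usq i : u i ^+ 2 = x i `^ s.
  by rewrite /u /s powRrM -[2]/(2%:R) powR_mulrn // powR_ge0.
have tsq : t ^+ 2 = c `^ s by rewrite /t /s powRrM -[2]/(2%:R) powR_mulrn // powR_ge0.
have tang i : x i `^ s <= c `^ (s - 1) * (s * x i + (1 - s) * c).
  by apply: tangent_powR; rewrite ?s0 ?s1 //; case/andP: (x01 i).
set w := fun n => c `^ (s - 1) * (s * mean x n + (1 - s) * c) - 2 * t * mean u n + t ^+ 2.
have hw : w @ \oo --> c `^ (s - 1) * (s * c + (1 - s) * c) - 2 * t * t + t ^+ 2.
  apply: cvgD; last exact: cvg_cst.
  apply: cvgB; last exact: cvgMr.
  apply: cvgMr; apply: cvgD; last exact: cvg_cst.
  exact: cvgMr.
have lim0 : c `^ (s - 1) * (s * c + (1 - s) * c) - 2 * t * t + t ^+ 2 = 0.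
  have -> : s * c + (1 - s) * c = c by ring.
  rewrite mulrC mulr_powRB1 ?ltW // -tsq; ring.
rewrite lim0 in hw.
have hsq : mean (fun i => (u i - t) ^+ 2) @ \oo --> 0.
  apply: (squeeze0 _ hw) => n; rewrite mean_ge0 /=; last by move=> i; exact: sqr_ge0.
  case: n => [|n].
    rewrite /w /mean !big_ord0 !mulr0 add0r subr0.
    rewrite addr_ge0 ?sqr_ge0 // mulr_ge0 ?powR_ge0 // mulr_ge0 ?subr_ge0 // ltW //.
  have -> : mean (fun i => (u i - t) ^+ 2) n.+1 =
      mean (fun i => x i `^ s) n.+1 - 2 * t * mean u n.+1 + t ^+ 2.
    have -> : (fun i => (u i - t) ^+ 2) = (fun i => (x i `^ s + (- (2 * t)) * u i) + t ^+ 2).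
      by apply/funext => i; rewrite sqrrB usq; ring.
    by rewrite meanD meanC // meanD meanZ; ring.
  rewrite /w lerD2r lerD2r.
  have := @mean_le _ (fun i => x i `^ s) (fun i => c `^ (s - 1) * (s * x i) + c `^ (s - 1) * ((1 - s) * c)) n.+1.
  rewrite meanD meanC // meanZ meanZ => h.
  rewrite mulrDr; apply: h => i; rewrite -mulrDr; exact: tang.
have habs := mean_sq_abs hsq.
have rinv0 : 0 < r^-1 by rewrite invr_gt0.
have tc : t `^ r^-1 = c by rewrite /t -powRrM mulfV ?gt_eqF // powRr1 // ltW.
have xu i : u i `^ r^-1 = x i.
  by rewrite /u -powRrM mulfV ?gt_eqF // powRr1 //; case/andP: (x01 i).
have := @mean_cont _ u (fun y => `|y `^ r^-1 - c|) t u01 _ habs.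
rewrite tc subrr normr0.
have -> : (fun i => `|u i `^ r^-1 - c|) = (fun i => `|x i - c|) by apply/funext => i; rewrite xu.
apply.
move=> e e0; have [M [M0 HM]] := powR_modulus rinv0 t01 e0.
exists M; split => // y y01; rewrite subr0 normr_id.
apply: le_trans (HM y y01); rewrite tc.
by [].
Qed.

End Key.

Section Final.
Context d (Omega : measurableType d) (R : realType) (P : probability Omega R) (T : Omega -> Omega).
Hypothesis mT : measurable_fun setT T.
Hypothesis pT : forall A, measurable A -> P (T @^-1` A) = P A.

Lemma c01 B C : measurable B -> measurable C -> 0 <= mr P B * mr P C <= 1.
Proof.
move=> mB mC; rewrite mulr_ge0 ?mr_ge0 //= -[1]mulr1 ler_pM ?mr_ge0 ?mr_le1 //.
Qed.

Lemma wm_ii : ergodic (mu2 P) (S2 T) -> forall r : R, 0 < r -> forall B C : set Omega,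
  measurable B -> measurable C ->
  avg_pow P T r B C @ \oo --> (fine (P B)) `^ r * (fine (P C)) `^ r.
Proof.
move=> wm r r0 B C mB mC.
rewrite -powRM ?mr_ge0 //.
have := @mean_cont _ (aseq P T B C) (fun y => y `^ r) (mr P B * mr P C) (fun i => aseq01 P mT i mB mC) _
  (wm_abs mT pT wm mB mC).
apply.
move=> e e0; exact: (powR_modulus r0 (c01 mB mC) e0).
Qed.

Lemma iii_wm : (forall B C : set Omega, measurable B -> measurable C ->
      avg P T B C @ \oo --> fine (P B) * fine (P C) /\
      exists r : R, 0 < r /\ r <= 2^-1 /\
        avg_pow P T r B C @ \oo --> (fine (P B)) `^ r * (fine (P C)) `^ r) ->
  ergodic (mu2 P) (S2 T).
Proof.
move=> H; apply: (conv_ergodic mT pT) => B C mB mC.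
have [h1 [r [r0 [rh h2]]]] := H B C mB mC.
apply: (key_conv (fun i => aseq01 P mT i mB mC) (c01 mB mC) r0 rh h1).
by rewrite powRM ?mr_ge0.
Qed.

Theorem main_equiv :
  let cond_ii :=
    forall r : R, 0 < r -> forall B C : set Omega, measurable B -> measurable C ->
      avg_pow P T r B C @ \oo --> (fine (P B)) `^ r * (fine (P C)) `^ r in
  let cond_iii :=
    forall B C : set Omega, measurable B -> measurable C ->
      avg P T B C @ \oo --> fine (P B) * fine (P C) /\
      exists r : R, 0 < r /\ r <= 2^-1 /\
        avg_pow P T r B C @ \oo --> (fine (P B)) `^ r * (fine (P C)) `^ r in
  [/\ weakly_mixing P T <-> cond_ii,
      weakly_mixing P T <-> cond_iii &
      weakly_mixing P T <->
        (ergodic P T /\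
         forall B C : set Omega, measurable B -> measurable C ->
           avg_pow P T (2^-1) B C @ \oo -->
             (fine (P B)) `^ (2^-1) * (fine (P C)) `^ (2^-1))].
Proof.
move=> cii ciii.
have hwm : weakly_mixing P T <-> ergodic (mu2 P) (S2 T) by [].
have half : (0 : R) < 2^-1 by rewrite invr_gt0.
have ii_iii : cii -> ciii.
  move=> h B C mB mC; split.
    have E : avg P T B C = avg_pow P T 1 B C.
      apply/funext => n; rewrite avg_pow_aseq avg_aseq; congr mean; apply/funext => i.
      by rewrite powRr1 //; case/andP: (aseq01 P mT i mB mC).
    rewrite E (_ : fine (P B) * fine (P C) = (fine (P B)) `^ 1 * (fine (P C)) `^ 1).
      exact: h.
    by rewrite !powRr1 // fine_ge0 // measure_ge0.
  exists 2^-1; split; first exact: half.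
  by split => //; apply: h.
split.
- split; first by move=> /hwm; exact: wm_ii.
  by move=> h; apply/hwm; apply: iii_wm; exact: ii_iii.
- split; first by move=> /hwm /wm_ii; exact: ii_iii.
  by move=> h; apply/hwm; exact: iii_wm.
- split.
    move=> /hwm wm; split; first exact: (wm_ergodic wm).
    by move=> B C mB mC; apply: wm_ii.
  move=> [erg h]; apply/hwm; apply: iii_wm => B C mB mC; split.
    exact: (mean_ergodic mT pT erg mB mC).
  by exists 2^-1; split => //; split => //; apply: h.
Qed.

End Final.


Unset Implicit Arguments.

Theorem proposition6p3 (d : measure_display) (Omega : measurableType d)
  (R : realType) (P : probability Omega R) (T : Omega -> Omega) :
  measure_preserving P T ->
  let cond_ii :=
    forall r : R, 0 < r -> forall B C : set Omega, measurable B -> measurable C ->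
      avg_pow P T r B C @ \oo --> (fine (P B)) `^ r * (fine (P C)) `^ r in
  let cond_iii :=
    forall B C : set Omega, measurable B -> measurable C ->
      avg P T B C @ \oo --> fine (P B) * fine (P C) /\
      exists r : R, 0 < r /\ r <= 2^-1 /\
        avg_pow P T r B C @ \oo --> (fine (P B)) `^ r * (fine (P C)) `^ r in
  [/\ weakly_mixing P T <-> cond_ii,
      weakly_mixing P T <-> cond_iii &
      weakly_mixing P T <->
        (ergodic P T /\
         forall B C : set Omega, measurable B -> measurable C ->
           avg_pow P T (2^-1) B C @ \oo -->
             (fine (P B)) `^ (2^-1) * (fine (P C)) `^ (2^-1))].
Proof.
move=> [mT pT]; exact: (main_equiv mT pT).
Qed.
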